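(* Let $p,q\geq 2$ be relatively prime integers and $x,y,z,w,a\in A_{pq}$. If $f_{p,q}(x,a,y)=f_{p,q}(z,a,w)$, then $x\equiv z\pmod q$.
   Context: For an integer $n>1$, $A_n=\{0,1,\dots,n-1\}$. Define $g_{p,q}:A_{pq}\times A_{pq}\to A_{pq}$ by writing $x=x_1q+x_0$, $y=y_1q+y_0$ with $x_0,y_0\in A_q$, $x_1,y_1\in A_p$ (uniquely), and setting $g_{p,q}(x,y)=x_0p+y_1$. Define $f_{p,q}:A_{pq}^3\to A_{pq}$ by $f_{p,q}(x,a,y)=g_{p,q}(g_{p,q}(x,a),g_{p,q}(a,y))$. *)

(* Defs.v *)
From mathcomp Require Import all_boot.
Set Implicit Arguments. Unset Strict Implicit. Unset Printing Implicit Defensive.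

(* A_n = {0,...,n-1} is represented by natural numbers below n (hypotheses x < p*q).
   For x, y in A_{pq}: x = x1*q + x0 with x0 = x %% q < q and x1 = x %/ q < p. *)
Definition g (p q x y : nat) : nat := (x %% q) * p + y %/ q.

Definition f (p q x a y : nat) : nat := g p q (g p q x a) (g p q a y).

(* Main.v *)
Require Import Defs.
From mathcomp Require Import all_boot.
From mathcomp Require Import zify.

Lemma cancel_mod (p q X Z : nat) : coprime p q -> X < q -> Z < q -> X <= Z ->
  X * p = Z * p %[mod q] -> X = Z.
Proof.
move=> cop hX hZ le /eqP; rewrite eq_sym eqn_mod_dvd; last by rewrite leq_mul2r le orbT.
rewrite -mulnBl Gauss_dvdl; last by rewrite coprime_sym.
move=> hd; have : Z - X < q by lia.
move=> lt; have := dvdn_leq; case E: (Z - X) => [|k]; first by lia.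
by move=> H; rewrite E in hd; have := H _ _ (ltn0Sn k) hd; lia.
Qed.

Theorem lemma4 (p q x y z w a : nat) :
  2 <= p -> 2 <= q -> coprime p q ->
  x < p * q -> y < p * q -> z < p * q -> w < p * q -> a < p * q ->
  f p q x a y = f p q z a w ->
  x = z %[mod q].
Proof.
move=> hp hq cop hx hy hz hw ha; rewrite /f /g.
have q0 : 0 < q by lia.
have p0 : 0 < p by lia.
have bnd : forall b, b < p * q -> (a %% q * p + b %/ q) %/ q < p.
  move=> b hb; rewrite ltn_divLR //.
  have : a %% q < q by rewrite ltn_mod.
  have : b %/ q < p by rewrite ltn_divLR // mulnC.
  nia.
move=> E.
have E2 := congr1 (fun t => t %/ p) E.
rewrite /= !divnMDl // (divn_small (bnd _ hy)) (divn_small (bnd _ hw)) !addn0 in E2.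
move: E2 => /eqP; rewrite eqn_modDr => /eqP E3.
have hX : x %% q < q by rewrite ltn_mod.
have hZ : z %% q < q by rewrite ltn_mod.
idtac.
case: (leqP (x %% q) (z %% q)) => le.
  exact: (cancel_mod _ _ _ _ cop hX hZ le E3).
apply/esym; apply: (cancel_mod _ _ _ _ cop hZ hX (ltnW le)); by rewrite E3.
Qed.
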